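(* Let $a$ and $b$ be coprime odd integers and let $\gamma$ be a positive integer such that $2^\gamma\,\|\,(a+b)$. Then \[G_{(a,b)}(0)\supsetneq G_{(a,b)}(1)\supsetneq G_{(a,b)}(2)\supsetneq\cdots\supsetneq G_{(a,b)}(\gamma)\supsetneq G_{(a,b)}(\gamma+1)=\emptyset.\]
   Context: For coprime nonzero integers $a,b$ and an integer $\beta\geq0$, $G_{(a,b)}(\beta)$ is the set of positive integers $d$ such that $2^\beta d\mid(a^k+b^k)$ for some positive integer $k$. $2^\gamma\,\|\,m$ means $2^\gamma\mid m$ and $2^{\gamma+1}\nmid m$. *)

(* Defs.v *)
From mathcomp Require Import all_boot all_algebra.
Set Implicit Arguments. Unset Strict Implicit. Unset Printing Implicit Defensive.
Import GRing.Theory Num.Theory.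
Local Open Scope ring_scope.

Definition G (a b : int) (beta : nat) (d : nat) : Prop :=
  (0 < d)%N /\ exists k : nat, (0 < k)%N /\ ((2 ^+ beta * d%:Z) %| a ^+ k + b ^+ k)%Z.

Definition exactly_divides_pow2 (gamma : nat) (m : int) : Prop :=
  ((2 ^+ gamma : int) %| m)%Z /\ ~ ((2 ^+ gamma.+1 : int) %| m)%Z.

(* Main.v *)
Require Import Defs.
From mathcomp Require Import all_boot all_algebra.
From mathcomp Require Import zify ring.
Import GRing.Theory Num.Theory.
Local Open Scope ring_scope.

Lemma odd1 (x : int) : ~(2 %| x)%Z -> (2 %| x - 1)%Z.
Proof. move=> H; apply/dvdzP; exists (x %/ 2)%Z.
have := divz_eq x 2. have := modz_ge0 x (isT : (2:int) != 0). have := ltz_mod x (isT : (2:int) != 0).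
have : (x %% 2)%Z != 0. apply/negP => /eqP h; apply: H; apply/dvdzP; exists (x %/ 2)%Z. by rewrite {1}(divz_eq x 2) h addr0.
move: (x %/ 2)%Z (x %% 2)%Z => q r. lia. Qed.

Lemma odd2 (x : int) : (2 %| x - 1)%Z -> ~ (2 %| x)%Z.
Proof. move=> /dvdzP [q Hq] /dvdzP [r Hr]. lia. Qed.

Lemma oddM (x y : int) : (2 %| x - 1)%Z -> (2 %| y - 1)%Z -> (2 %| x * y - 1)%Z.
Proof. move=> Hx Hy. have ->: x * y - 1 = (x - 1) * y + (y - 1) by ring.
by rewrite rpredD // dvdz_mulr. Qed.

Lemma oddX (x : int) n : (2 %| x - 1)%Z -> (2 %| x ^+ n - 1)%Z.
Proof. move=> Hx; elim: n => [|n IH]; first by rewrite expr0 subrr dvdz0.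
by rewrite exprS oddM. Qed.

Lemma oddN (x : int) : (2 %| x - 1)%Z -> (2 %| - x - 1)%Z.
Proof. move=> /dvdzP [q Hq]; apply/dvdzP; exists (- q - 1). lia. Qed.

Lemma sq4 (x : int) : (2 %| x - 1)%Z -> (4 %| x ^+ 2 - 1)%Z.
Proof. move=> /dvdzP [q Hq]; apply/dvdzP; exists (q * (q + 1)).
have -> : x = q * 2 + 1 by lia. ring. Qed.

Lemma key (a b : int) (gamma : nat) :
  ~ (2 %| a)%Z -> ~ (2 %| b)%Z ->
  (0 < gamma)%N -> exactly_divides_pow2 gamma (a + b) ->
  forall k, (0 < k)%N -> ~ ((2 ^+ gamma.+1 : int) %| a ^+ k + b ^+ k)%Z.
Proof.
move=> Ha Hb Hg [Hc Hnc] k Hk Hd.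
have oa := @odd1 a Ha; have ob := @odd1 b Hb.
case: (boolP (odd k)) => ok.
-
  have [m km] : exists m, k = m.*2.+1.
    exists k./2. by rewrite -[in LHS](odd_double_half k) ok.
  set S := \sum_(i < k) a ^+ (k.-1 - i) * (- b) ^+ i.
  have HS : a ^+ k + b ^+ k = (a + b) * S.
    have := subrXX a (- b) k. rewrite opprK => <-.
    by rewrite km -muln2 !exprS !exprM -!(exprAC _ 2) sqrrN mulNr opprK.
  have Sodd : (2 %| S - 1)%Z.
    have h1 : (2 %| \sum_(i < k) (a ^+ (k.-1 - i) * (- b) ^+ i - 1))%Z.
      apply: rpred_sum => i _. by apply: oddM; apply: oddX => //; apply: oddN.
    rewrite sumrB sumr_const card_ord in h1.
    have -> : S - 1 = (S - 1 *+ k) + (m%:Z * 2).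
      rewrite km; clearbody S; lia.
    by rewrite rpredD // dvdz_mull.
  move/dvdzP: Hc => [e He].
  have eodd : (2 %| e - 1)%Z.
    apply: (@odd1 e) => /dvdzP [f Hf]; apply: Hnc; apply/dvdzP; exists f.
    by rewrite He Hf exprSr; ring.
  have := @oddM e S eodd Sodd. move/(@odd2 (e * S)) => HH; apply HH.
  have nz : (2 : int) ^+ gamma != 0 by apply: expf_neq0.
  rewrite -(dvdz_mul2l nz). rewrite HS He in Hd.
  have E1 : (e * 2 ^+ gamma) * S = 2 ^+ gamma * (e * S) by ring.
  by move: Hd; rewrite E1 exprSr mulrC.
-
  have [m km] : exists m, k = (m * 2)%N.
    exists k./2. by rewrite -[in LHS](odd_double_half k) (negbTE ok) add0n muln2.
  have h4 : (4 %| a ^+ k + b ^+ k)%Z.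
    apply: dvdz_trans Hd. apply/dvdzP; exists (2 ^+ gamma.-1).
    by rewrite -(prednK Hg) !exprS mulrA mulrC.
  have ha := @sq4 _ (@oddX a m oa). have hb := @sq4 _ (@oddX b m ob).
  rewrite -!exprM -km in ha hb.
  move/dvdzP: h4 => [u hu]; move/dvdzP: ha => [v hv]; move/dvdzP: hb => [w hw].
  lia.
Qed.

Theorem corollary2p16 (a b : int) (gamma : nat) :
  coprimez a b -> ~ (2 %| a)%Z -> ~ (2 %| b)%Z ->
  (0 < gamma)%N -> exactly_divides_pow2 gamma (a + b) ->
  (forall i : nat, (i <= gamma)%N ->
     (forall d : nat, G a b i.+1 d -> G a b i d) /\
     (exists d : nat, G a b i d /\ ~ G a b i.+1 d)) /\
  (forall d : nat, ~ G a b gamma.+1 d).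
Proof.
move=> _ Ha Hb Hg Hex.
have K := @key a b gamma Ha Hb Hg Hex.
split.
- move=> i Hi; split.
  + move=> d [Hd [k [Hk Hdk]]]; split => //; exists k; split => //.
    apply: dvdz_trans Hdk; apply/dvdzP; exists 2; rewrite exprSr; ring.
  + have Ep : forall j, (2 ^+ j * (2 ^ (gamma - i))%:Z : int) = 2 ^+ (j + (gamma - i)).
      move=> j. by rewrite exprD -natz natrX.
    exists (2 ^ (gamma - i))%N; split.
    * split; first by rewrite expn_gt0.
      exists 1%N; split => //. by rewrite Ep subnKC // !expr1; case: Hex.
    * move=> [_ [k [Hk Hdk]]]; apply: (K k Hk).
      by rewrite Ep addSn subnKC in Hdk.
- move=> d [_ [k [Hk Hdk]]]; apply: (K k Hk).
  apply: dvdz_trans Hdk. by rewrite dvdz_mulr.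
Qed.
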